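(* Let $\mathcal T$ be a transducer with $n\ge1$ states. The following are equivalent: (1) $\mathcal T$ is not zero-avoiding (with any bound $k\in\mathbb N_0$); (2) $\mathcal T$ has a computation $P$ with $d_{max}(P)\ge n$ and $d(P)=0$; (3) $\mathcal T$ has a computation $P$ of the form $P=BC_1AC_2D$, for some paths $B,C_1,A,C_2,D$, where $C_1,C_2$ are cycles with $d(C_1)\,d(C_2)<0$.
   Context: A transducer is a quintuple $\mathcal T=(Q,\Sigma,E,I,F)$ with finite state set $Q$, finite alphabet $\Sigma$, finite transition set $E\subseteq Q\times\{x/y : x,y\in\Sigma\cup\{\lambda\}\}\times Q$ ($\lambda$ the empty word), nonempty initial set $I\subseteq Q$, final set $F\subseteq Q$. A path is a finite sequence of consecutive transitions; its label $x_1\cdots x_\ell/y_1\cdots y_\ell$ is formed by concatenating input parts and output parts. A cycle is a path whose first and last states coincide. A computation is a path that is empty or starts at an initial state. For a path $P$ with label $u/v$, $d(P)=|u|-|v|$, and $d_{max}(P)=\max\{|d(Q)| : Q\text{ a prefix of }P\}$ (prefixes being initial segments of transitions, including the empty path). $\mathcal T$ is zero-avoiding with bound $k\in\mathbb N_0$ if for every computation $P$ of $\mathcal T$, $d_{max}(P)>k$ implies $d(P)\neq0$; $\mathcal T$ is zero-avoiding if it is zero-avoiding with some bound $k\in\mathbb N_0$. *)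

(* Defs.v *)
From HB Require Import structures.
From mathcomp Require Import all_boot all_order all_algebra.
Set Implicit Arguments. Unset Strict Implicit. Unset Printing Implicit Defensive.
Import Order.TTheory GRing.Theory Num.Theory.

(* A transition (p, x, y, q) : p --x/y--> q, with None standing for the empty word lambda. *)
Definition transition (Q S : finType) : finType :=
  (Q * option S * option S * Q)%type.

Section Transducer.
Variables Q S : finType.

Definition src (t : transition Q S) : Q := t.1.1.1.
Definition inp (t : transition Q S) : option S := t.1.1.2.
Definition outp (t : transition Q S) : option S := t.1.2.
Definition tgt (t : transition Q S) : Q := t.2.

Record transducer := Transducer {
  trans : {set transition Q S};
  init  : {set Q};
  final : {set Q} }.

Variable T : transducer.

Definition is_path (P : seq (transition Q S)) : bool :=
  all (fun t => t \in trans T) P &&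
  match P with
  | [::] => true
  | t :: P' => path (fun t1 t2 => tgt t1 == src t2) t P'
  end.

Definition is_cycle (P : seq (transition Q S)) : bool :=
  is_path P &&
  match P with
  | [::] => false
  | t :: P' => src t == tgt (last t P')
  end.

Definition computation (P : seq (transition Q S)) : bool :=
  is_path P &&
  match P with
  | [::] => true
  | t :: _ => src t \in init T
  end.

Definition in_len (P : seq (transition Q S)) : nat :=
  count (fun t => inp t != None) P.
Definition out_len (P : seq (transition Q S)) : nat :=
  count (fun t => outp t != None) P.

Definition dd (P : seq (transition Q S)) : int :=
  (in_len P)%:Z - (out_len P)%:Z.

Definition dmax (P : seq (transition Q S)) : nat :=
  \max_(i < (size P).+1) `|dd (take i P)|%N.

Definition zero_avoiding_with_bound (k : nat) : Prop :=
  forall P, computation P -> k < dmax P -> dd P != 0.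

Definition zero_avoiding : Prop := exists k : nat, zero_avoiding_with_bound k.

End Transducer.

(* Main.v *)
Require Import Defs.
From HB Require Import structures.
From mathcomp Require Import all_boot all_order all_algebra.
From mathcomp Require Import zify.
From Stdlib Require Import Classical.
Set Implicit Arguments. Unset Strict Implicit. Unset Printing Implicit Defensive.
Import Order.TTheory GRing.Theory Num.Theory.
Local Open Scope ring_scope.

Lemma ivt_up (f : nat -> int) (u v : nat) (c : int) :
  (forall i, f i.+1 <= f i + 1) -> (u <= v)%N -> f u <= c -> c <= f v ->
  exists p, [/\ (u <= p)%N, (p <= v)%N & f p = c].
Proof.
move=> Hs Huv; rewrite -(subnKC Huv); elim: (v - u)%N => [|d IH] Hu Hv.
  by rewrite addn0 in Hv *; exists u; split => //; lia.
have [Hc|Hc] := lerP c (f (u + d)%N).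
  by have [p [H1 H2 H3]] := IH Hu Hc; exists p; split => //; lia.
exists (u + d.+1)%N; split => //; first lia.
have := Hs (u + d)%N; rewrite addnS in Hv *; lia.
Qed.

Lemma ivt_down (f : nat -> int) (u v : nat) (c : int) :
  (forall i, f i <= f i.+1 + 1) -> (u <= v)%N -> c <= f u -> f v <= c ->
  exists p, [/\ (u <= p)%N, (p <= v)%N & f p = c].
Proof.
move=> Hs Huv H1 H2.
have [p [? ? Hp]] := @ivt_up (fun i => - f i) u v (- c) ltac:(move=> i; have := Hs i; lia) Huv ltac:(lia) ltac:(lia).
by exists p; split => //; lia.
Qed.

Section L.
Variables (Q S : finType) (T : transducer Q S).
Notation tr := (transition Q S).

Lemma dd_cat (x y : seq tr) : dd (x ++ y) = dd x + dd y.
Proof. rewrite /dd /in_len /out_len !count_cat; lia. Qed.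

Lemma dd_cons1 (t : tr) : -1 <= dd [:: t] <= 1.
Proof. rewrite /dd /in_len /out_len /=; case: (inp t != None); case: (outp t != None) => /=; lia. Qed.

Lemma dd_take_step (P : seq tr) i :
  dd (take i.+1 P) <= dd (take i P) + 1 /\ dd (take i P) <= dd (take i.+1 P) + 1.
Proof.
case: (ltnP i (size P)) => Hi.
  case: P Hi => [//|t P'] Hi.
  rewrite (take_nth t Hi) -cats1 dd_cat; have := dd_cons1 (nth t (t :: P') i); lia.
rewrite !take_oversize //; [lia | exact: leqW].
Qed.

Definition jn (x y : seq tr) :=
  if x is a :: x' then (if y is b :: _ then tgt (last a x') == src b else true) else true.

Lemma is_path_cat (x y : seq tr) :
  is_path T (x ++ y) = [&& is_path T x, is_path T y & jn x y].
Proof.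
rewrite /is_path all_cat.
case: x => [|a x] /=; first by case: y => [|b y] //=; rewrite !andbT.
rewrite cat_path; case: y => [|b y] /=; first by rewrite !andbT.
rewrite /=. 
by case: (a \in trans T); case: (all _ x); case: (b \in trans T); case: (all _ y); case: (path _ a x); case: (tgt _ == src b); case: (path _ b y).
Qed.

Lemma is_path_take (P : seq tr) i : is_path T P -> is_path T (take i P).
Proof.
rewrite -{1}(cat_take_drop i P) is_path_cat; by case/and3P.
Qed.

Lemma is_path_drop (P : seq tr) i : is_path T P -> is_path T (drop i P).
Proof.
rewrite -{1}(cat_take_drop i P) is_path_cat; by case/and3P.
Qed.

Lemma computation_take (P : seq tr) i : computation T P -> computation T (take i P).
Proof.
rewrite /computation => /andP [Hp Hi]; rewrite is_path_take //=.
by case: P Hp Hi => [|t P] //=; case: i.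
Qed.

Lemma dmax_ge (P : seq tr) i : (i <= size P)%N -> (`|dd (take i P)| <= dmax P)%N.
Proof.
move=> Hi; rewrite /dmax.
by apply: (@leq_bigmax _ (fun j : 'I_(size P).+1 => `|dd (take j P)|%N) (Ordinal (n:=(size P).+1) (m:=i) Hi)).
Qed.

Lemma dmax_attained (P : seq tr) : exists2 i, (i <= size P)%N & dmax P = `|dd (take i P)|%N.
Proof.
rewrite /dmax; have [i0 Hi0] := @bigop.eq_bigmax _ (fun j : 'I_(size P).+1 => `|dd (take j P)|%N) (ltac:(by rewrite card_ord)).
by exists i0; [have := ltn_ord i0 | rewrite Hi0].
Qed.

End L.

Lemma pigeon (Q : finType) (st : nat -> Q) (D : nat -> int) a b :
  (forall i, D i.+1 <= D i + 1) -> (a <= b)%N ->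
  (#|Q|%:Z <= D b - D a) ->
  exists p q, [/\ (a <= p)%N, (p < q)%N, (q <= b)%N, st p = st q & D p < D q].
Proof.
move=> Hs Hab HQ.
have hit : forall j : 'I_#|Q|.+1, exists p, (a <= p <= b)%N && (D p == D a + (j : nat)%:Z).
  move=> j; have := ltn_ord j => Hj.
  have [p [H1 H2 H3]] := @ivt_up D a b (D a + (j : nat)%:Z) Hs Hab ltac:(lia) ltac:(lia).
  by exists p; apply/andP; split; [apply/andP|apply/eqP].
pose f j := ex_minn (hit j).
have fP : forall j, [/\ (a <= f j)%N, (f j <= b)%N, D (f j) = D a + (j : nat)%:Z &
            forall p, (a <= p <= b)%N -> D p = D a + (j : nat)%:Z -> (f j <= p)%N].
  move=> j; rewrite /f; case: ex_minnP => m /andP [/andP [H1 H2] /eqP H3] Hm.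
  split => // p Hp Hd; apply: Hm; rewrite Hp /=; exact/eqP.
have mono : forall j j' : 'I_#|Q|.+1, (j < j')%N -> (f j < f j')%N.
  move=> j j' Hjj'.
  have [Ha Hb Hd Hm] := fP j; have [Ha' Hb' Hd' Hm'] := fP j'.
  have [p [H1 H2 H3]] := @ivt_up D a (f j') (D a + (j : nat)%:Z) Hs Ha' ltac:(lia) ltac:(lia).
  have := Hm p ltac:(apply/andP; split; lia) H3.
  rewrite leq_eqVlt => /orP [/eqP E|]; last by lia.
  suff : f j != f j' by lia.
  apply/eqP => E'; move: Hd Hd'; rewrite E' => ->; lia.
case: (boolP [exists j : 'I_#|Q|.+1, exists j' : 'I_#|Q|.+1, (j < j')%N && (st (f j) == st (f j'))]).
  move/existsP => [j /existsP [j' /andP [Hlt /eqP E]]].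
  have [Ha Hb Hd Hm] := fP j; have [Ha' Hb' Hd' Hm'] := fP j'.
  exists (f j), (f j'); split => //; [exact: mono | lia].
move=> /negP Hn; exfalso.
have inj : injective (fun j : 'I_#|Q|.+1 => st (f j)).
  move=> j j' E; case: (ltngtP j j') => H.
  - by exfalso; apply: Hn; apply/existsP; exists j; apply/existsP; exists j'; rewrite H E eqxx.
  - by exfalso; apply: Hn; apply/existsP; exists j'; apply/existsP; exists j; rewrite H E eqxx.
  - exact: val_inj.
by have := leq_card _ inj; rewrite card_ord ltnn.
Qed.

Lemma pigeon_down (Q : finType) (st : nat -> Q) (D : nat -> int) a b :
  (forall i, D i <= D i.+1 + 1) -> (a <= b)%N ->
  (#|Q|%:Z <= D a - D b) ->
  exists p q, [/\ (a <= p)%N, (p < q)%N, (q <= b)%N, st p = st q & D q < D p].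
Proof.
move=> Hs Hab HQ.
have [p [q [H1 H2 H3 H4 H5]]] := @pigeon Q st (fun i => - D i) a b ltac:(move=> i; have := Hs i; lia) Hab ltac:(lia).
exists p, q; split => //; lia.
Qed.

Section L.
Variables (Q S : finType) (T : transducer Q S).
Notation tr := (transition Q S).

Lemma take_split (P : seq tr) p q : (p <= q)%N -> take q P = take p P ++ drop p (take q P).
Proof. by move=> H; rewrite -{1}(cat_take_drop p (take q P)) take_takel. Qed.

Lemma dd_seg (P : seq tr) p q : (p <= q)%N -> dd (drop p (take q P)) = dd (take q P) - dd (take p P).
Proof. by move=> H; rewrite [in X in _ = X - _](take_split P H) dd_cat; lia. Qed.

Definition st (t0 : tr) (P : seq tr) (p : nat) : Q :=
  if p is p'.+1 then tgt (nth t0 P p') else src t0.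

Lemma seg_cycle (t0 : tr) (P' : seq tr) p q :
  is_path T (t0 :: P') -> (p < q)%N -> (q <= size (t0 :: P'))%N ->
  st t0 (t0 :: P') p = st t0 (t0 :: P') q ->
  is_cycle T (drop p (take q (t0 :: P'))).
Proof.
set P := t0 :: P' => Hp Hpq Hq Hst.
rewrite /is_cycle is_path_drop ?is_path_take //=.
have Hsz : size (drop p (take q P)) = (q - p)%N by rewrite size_drop size_takel.
case Es: (drop p (take q P)) Hsz => [|x s'] Hsz; first by move: Hsz => /=; lia.
have Hx : x = nth t0 P p.
  by have := nth_drop p t0 (take q P) 0; rewrite Es addn0 nth_take.
have Hl : last x s' = nth t0 P q.-1.
  have -> : last x s' = last t0 (x :: s') by [].
  rewrite -Es -nth_last size_drop size_takel // nth_drop nth_take; last lia.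
  congr nth; lia.
rewrite Hl Hx.
have -> : src (nth t0 P p) = st t0 P p.
  clear Es Hsz Hx Hl; case: p Hpq Hst => [|p'] Hpq Hst //=.
  move: Hp => /andP [_ /= /pathP Hpath].
  by apply/esym/eqP; apply: Hpath; rewrite /P /= in Hq; lia.
by rewrite Hst; clear Es Hsz Hx Hl; case: q Hpq Hq Hst => [|q'].
Qed.

End L.

Section L.
Variables (Q S : finType) (T : transducer Q S).
Notation tr := (transition Q S).

Fixpoint nc (a : nat) (C : seq tr) : seq tr := if a is a'.+1 then nc a' C ++ C else [::].

Lemma dd_nc a C : dd (nc a C) = (a%:Z) * dd C.
Proof. elim: a => [|a IH] /=; first by rewrite mul0r. rewrite dd_cat IH; lia. Qed.

Lemma pump1 (X C Y : seq tr) : computation T (X ++ C ++ Y) -> is_cycle T C ->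
  computation T (X ++ C ++ C ++ Y).
Proof.
case: C => [|c C'] //.
rewrite /computation => /andP [Hp Hh] /andP [HC Hcyc].
apply/andP; split.
  move: Hp; rewrite !is_path_cat => /and3P [HX /and3P [HC' HY HjC] HjX].
  rewrite HX HC' HY HjC /= eq_sym Hcyc /=.
  by case: X HjX {HX Hh} => [|x X'].
by case: X Hh {Hp}.
Qed.

Lemma pump (X C Y : seq tr) a : computation T (X ++ C ++ Y) -> is_cycle T C ->
  computation T (X ++ nc a C ++ C ++ Y).
Proof.
move=> H HC; elim: a => [|a IH] //=.
have := @pump1 (X ++ nc a C) C Y; rewrite -!catA; apply => //.
Qed.

End L.

Section L.
Variables (Q S : finType) (T : transducer Q S).
Notation tr := (transition Q S).

Lemma sign_prod (d1 d2 : int) : d1 * d2 < 0 -> (0 < d1 /\ d2 < 0) \/ (d1 < 0 /\ 0 < d2).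
Proof. move=> H; have [H1|H1|H1] := ltrgt0P d1; [left; by rewrite pmulr_rlt0 in H | right; by rewrite nmulr_rlt0 in H | by rewrite H1 mul0r in H]. Qed.

Lemma c_to_a :
  (exists B C1 A C2 D : seq tr,
       [/\ computation T (B ++ C1 ++ A ++ C2 ++ D),
           is_path T B, is_path T A, is_path T D &
           [/\ is_cycle T C1, is_cycle T C2 & dd C1 * dd C2 < 0]]) ->
  ~ zero_avoiding T.
Proof.
move=> [B [C1 [A [C2 [D [Hc HB HA HD [HC1 HC2 Hneg]]]]]]] [k Hk].
pose a := (k + absz (dd B))%N.
pose X := dd B + a.+1%:Z * dd C1.
pose b := absz (X + dd A).
pose P1 := (B ++ nc a C1 ++ C1) ++ (A ++ nc b C2 ++ C2) ++ D.
have HP1 : computation T P1.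
  have H1 := pump a Hc HC1.
  have := @pump _ _ T (B ++ nc a C1 ++ C1 ++ A) C2 D b; rewrite /P1 -!catA; apply => //.
pose u := size (B ++ nc a C1 ++ C1).
pose v := (u + size (A ++ nc b C2 ++ C2))%N.
have Hu : dd (take u P1) = X.
  by rewrite /P1 take_size_cat // !dd_cat dd_nc /X; lia.
have Hv : dd (take v P1) = X + dd A + b.+1%:Z * dd C2.
  rewrite /P1 catA take_size_cat; last by rewrite /v size_cat.
  by rewrite !dd_cat !dd_nc /X; lia.
have Huv : (u <= v)%N by rewrite /v leq_addr.
have Hvs : (v <= size P1)%N by rewrite /P1 catA size_cat /v /u !size_cat; lia.
have [p [Hup Hpv Hp0]] : exists p, [/\ (u <= p)%N, (p <= v)%N & dd (take p P1) = 0].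
  have [[s1 s2]|[s1 s2]] := sign_prod Hneg.
  - apply: (@ivt_down (fun i => dd (take i P1))) => //.
    + by move=> i; have := dd_take_step P1 i; lia.
    + rewrite Hu /X; nia.
    + rewrite Hv /b; nia.
  - apply: (@ivt_up (fun i => dd (take i P1))) => //.
    + by move=> i; have := dd_take_step P1 i; lia.
    + rewrite Hu /X; nia.
    + rewrite Hv /b; nia.
have Hps : (p <= size P1)%N by apply: leq_trans Hvs.
suff Hd : (k < dmax (take p P1))%N by have := Hk _ (computation_take p HP1) Hd; rewrite Hp0 eqxx.
have := @dmax_ge _ _ (take p P1) u; rewrite size_takel // take_takel // Hu => /(_ Hup).
apply: leq_trans.
have [[s1 s2]|[s1 s2]] := sign_prod Hneg; rewrite /X /a; nia.
Qed.

End L.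

Section L.
Variables (Q S : finType) (T : transducer Q S).
Notation tr := (transition Q S).

Lemma build (t0 : tr) P' p1 q1 p2 q2 :
  computation T (t0 :: P') -> (p1 < q1)%N -> (q1 <= p2)%N -> (p2 < q2)%N ->
  (q2 <= size (t0 :: P'))%N ->
  st t0 (t0 :: P') p1 = st t0 (t0 :: P') q1 ->
  st t0 (t0 :: P') p2 = st t0 (t0 :: P') q2 ->
  (dd (take q1 (t0 :: P')) - dd (take p1 (t0 :: P'))) *
  (dd (take q2 (t0 :: P')) - dd (take p2 (t0 :: P'))) < 0 ->
  exists B C1 A C2 D : seq tr,
       [/\ computation T (B ++ C1 ++ A ++ C2 ++ D),
           is_path T B, is_path T A, is_path T D &
           [/\ is_cycle T C1, is_cycle T C2 & dd C1 * dd C2 < 0]].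
Proof.
set P := t0 :: P' => Hc H1 H2 H3 H4 Hs1 Hs2 Hneg.
have Hp : is_path T P by case/andP: Hc.
exists (take p1 P), (drop p1 (take q1 P)), (drop q1 (take p2 P)), (drop p2 (take q2 P)), (drop q2 P).
have E : take p1 P ++ drop p1 (take q1 P) ++ drop q1 (take p2 P) ++ drop p2 (take q2 P) ++ drop q2 P = P.
  rewrite !catA -(take_split P (ltnW H1)) -(take_split P H2) -(take_split P (ltnW H3)).
  exact: cat_take_drop.
split.
- by rewrite E.
- exact: is_path_take.
- exact/is_path_drop/is_path_take.
- exact: is_path_drop.
split.
- have Hq1 : (q1 <= size P)%N by apply: leq_trans H4; lia.
  by apply: seg_cycle.
- by apply: seg_cycle => //; lia.
- by rewrite !dd_seg //; apply: ltnW.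
Qed.

Lemma b_to_c : (0 < #|Q|)%N ->
  (exists P, computation T P /\ (#|Q| <= dmax P)%N /\ dd P = 0) ->
  exists B C1 A C2 D : seq tr,
       [/\ computation T (B ++ C1 ++ A ++ C2 ++ D),
           is_path T B, is_path T A, is_path T D &
           [/\ is_cycle T C1, is_cycle T C2 & dd C1 * dd C2 < 0]].
Proof.
move=> HQ [P [Hc [Hm Hd]]].
have [i Hi Hmax] := dmax_attained P.
case: P Hc Hm Hd Hi Hmax => [|t0 P'] Hc Hm Hd Hi Hmax.
  by move: Hm; rewrite Hmax /= /dd /in_len /out_len /= => /(leq_trans HQ).
set P := t0 :: P' in Hc Hm Hd Hi Hmax *.
pose D j := dd (take j P).
have Hup : forall j, D j.+1 <= D j + 1 by move=> j; have := dd_take_step P j; rewrite /D; lia.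
have Hdn : forall j, D j <= D j.+1 + 1 by move=> j; have := dd_take_step P j; rewrite /D; lia.
have D0 : D 0%N = 0 by rewrite /D take0.
have DS : D (size P) = 0 by rewrite /D take_size.
have Hi' : (#|Q| <= absz (D i))%N by rewrite /D -Hmax.
have [Hpos|Hneg] : (#|Q|%:Z <= D i) \/ (D i <= - (#|Q|%:Z)) by lia.
- have [p1 [q1 [A1 A2 A3 A4 A5]]] := @pigeon _ (st t0 P) D 0 i Hup (leq0n _) ltac:(lia).
  have [p2 [q2 [B1 B2 B3 B4 B5]]] := @pigeon_down _ (st t0 P) D i (size P) Hdn Hi ltac:(lia).
  apply: (@build t0 P' p1 q1 p2 q2) => //; [lia | ].
  rewrite -/P; move: A5 B5; rewrite /D; nia.
- have [p1 [q1 [A1 A2 A3 A4 A5]]] := @pigeon_down _ (st t0 P) D 0 i Hdn (leq0n _) ltac:(lia).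
  have [p2 [q2 [B1 B2 B3 B4 B5]]] := @pigeon _ (st t0 P) D i (size P) Hup Hi ltac:(lia).
  apply: (@build t0 P' p1 q1 p2 q2) => //; [lia | ].
  rewrite -/P; move: A5 B5; rewrite /D; nia.
Qed.

End L.

Theorem proposition3 (Q S : finType) (T : transducer Q S) (n : nat)
    (HQ : #|Q| = n) (Hn : (1 <= n)%N) (HI : init T != set0) :
  (~ zero_avoiding T <->
     exists P, computation T P /\ (n <= dmax P)%N /\ dd P = 0) /\
  ((exists P, computation T P /\ (n <= dmax P)%N /\ dd P = 0) <->
     exists B C1 A C2 D : seq (transition Q S),
       [/\ computation T (B ++ C1 ++ A ++ C2 ++ D),
           is_path T B, is_path T A, is_path T D &
           [/\ is_cycle T C1, is_cycle T C2 & dd C1 * dd C2 < 0]]).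
Proof.
have c2a := @c_to_a Q S T.
have b2c := @b_to_c Q S T; rewrite HQ in b2c; have {b2c} b2c := b2c Hn.
have a2b : ~ zero_avoiding T -> exists P, computation T P /\ (n <= dmax P)%N /\ dd P = 0.
  move=> H; case: (classic (exists P, computation T P /\ (n <= dmax P)%N /\ dd P = 0)) => // Hno.
  exfalso; apply: H; exists n.-1 => P Hc Hk; apply/eqP => Hd; apply: Hno.
  exists P; split => //; split => //; lia.
split; split.
- exact: a2b.
- by move=> H; apply: c2a; apply: b2c.
- exact: b2c.
- by move=> H; apply: a2b; apply: c2a.
Qed.
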